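(* Let $H$ be a Hilbert space, let $\mathbf{a}=[a_1,\dots,a_\ell]$ be a row and $\mathbf{b}=[b_1,\dots,b_\ell]^t$ a column of operators in $\mathcal{B}(H)$, and let $Tx=\sum_{j=1}^\ell a_jxb_j$ ($x\in\mathcal{B}(H)$). Then \[ \|T\|=\sup\left\{\left\|\sqrt{Q(\mathbf{b},\eta)^t}\,\mathbf{a}^*\right\|_{S1}:\eta\in H,\ \|\eta\|=1\right\}. \]
   Context: For $\eta\in H$, $Q(\mathbf{b},\eta)=(\langle b_j\eta,b_i\eta\rangle)_{i,j=1}^\ell\in M_\ell(\mathbb{C})$, which is positive semidefinite; $\sqrt{Q(\mathbf{b},\eta)^t}$ is the positive semidefinite square root of its transpose. $\mathbf{a}^*=[a_1^*,\dots,a_\ell^*]^t$ is a column of operators, and for a scalar matrix $\alpha=(\alpha_{jk})\in M_\ell(\mathbb{C})$, $\alpha\mathbf{a}^*$ is the column whose $j$-th entry is $\sum_k\alpha_{jk}a_k^*$. On $H^\ell$ define the norm $\|(\xi_1,\dots,\xi_\ell)\|_{S1}=\operatorname{trace}\sqrt{(\langle\xi_i,\xi_j\rangle)_{i,j=1}^\ell}$. For a column $\mathbf{c}=[c_1,\dots,c_\ell]^t$ of operators in $\mathcal{B}(H)$, regarded as an operator $H\to H^\ell$, $\xi\mapsto(c_1\xi,\dots,c_\ell\xi)$, $\|\mathbf{c}\|_{S1}$ denotes its operator norm from $H$ (Hilbert norm) to $(H^\ell,\|\cdot\|_{S1})$. $\|T\|$ is the operator norm on $\mathcal{B}(H)$.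 *)

(* Defs.v *)
From HB Require Import structures.
From mathcomp Require Import all_boot all_order all_algebra.
From mathcomp Require Import complex.
From mathcomp Require Import boolp classical_sets reals.

Set Implicit Arguments.
Unset Strict Implicit.
Unset Printing Implicit Defensive.

Import Order.TTheory GRing.Theory Num.Theory.
Local Open Scope ring_scope.
Local Open Scope classical_set_scope.

Section Hilbert.
Variable R : realType.
Local Notation C := R[i].
Variable H : lmodType C.
(* inner product, linear in the FIRST argument, conjugate-linear in the second *)
Variable ip : H -> H -> C.

Definition is_inner_product : Prop :=
  [/\ forall (a : C) (x y z : H), ip (a *: x + y) z = a * ip x z + ip y z,
      forall x y, ip y x = conjc (ip x y),
      forall x, 0 <= ip x x
    & forall x, ip x x = 0 -> x = 0].

Definition hnorm (x : H) : R := Num.sqrt (complex.Re (ip x x)).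

Definition hcomplete : Prop :=
  forall u : nat -> H,
    (forall e : R, 0 < e -> exists N : nat, forall m n : nat,
        (N <= m)%N -> (N <= n)%N -> hnorm (u m - u n) < e) ->
    exists x : H, forall e : R, 0 < e -> exists N : nat, forall n : nat,
        (N <= n)%N -> hnorm (u n - x) < e.

Definition is_hilbert : Prop := is_inner_product /\ hcomplete.

Definition bounded_op (f : H -> H) : Prop :=
  (forall (a : C) (x y : H), f (a *: x + y) = a *: f x + f y) /\
  exists M : R, forall x, hnorm (f x) <= M * hnorm x.

Definition opnorm (f : H -> H) : R :=
  sup [set hnorm (f x) | x in [set x | hnorm x <= 1]].

(* Hilbert-space adjoint (unique when it exists; exists for f in B(H)) *)
Definition is_adjoint (f g : H -> H) : Prop :=
  forall x y, ip (f x) y = ip x (g y).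

Definition adjoint (f : H -> H) : H -> H :=
  match pselect (exists g, is_adjoint f g) with
  | left e => projT1 (cid e)
  | right _ => fun _ => 0
  end.

Variable l : nat.

Definition psd (P : 'M[C]_l) : Prop :=
  forall v : 'cV[C]_l, 0 <= ((map_mx conjc v)^T *m P *m v) ord0 ord0.

Definition psd_sqrt (P : 'M[C]_l) : 'M[C]_l :=
  match pselect (exists S, psd S /\ S *m S = P) with
  | left e => projT1 (cid e)
  | right _ => 0
  end.

Definition gramQ (b : 'I_l -> H -> H) (eta : H) : 'M[C]_l :=
  \matrix_(i, j) ip (b j eta) (b i eta).

Definition S1vec (xi : 'I_l -> H) : R :=
  complex.Re (\tr (psd_sqrt (\matrix_(i, j) ip (xi i) (xi j)))).

(* ||c||_{S1}: operator norm of the column c : H -> (H^l, ||.||_{S1}) *)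
Definition S1col (c : 'I_l -> H -> H) : R :=
  sup [set S1vec (fun i => c i x) | x in [set x | hnorm x <= 1]].

Definition scal_col_adj (alpha : 'M[C]_l) (a : 'I_l -> H -> H) : 'I_l -> H -> H :=
  fun j x => \sum_(k < l) alpha j k *: adjoint (a k) x.

Definition Tmap (a b : 'I_l -> H -> H) (x : H -> H) : H -> H :=
  fun y => \sum_(j < l) a j (x (b j y)).

Definition Tnorm (a b : 'I_l -> H -> H) : R :=
  sup [set opnorm (Tmap a b x) | x in [set x | bounded_op x /\ opnorm x <= 1]].

End Hilbert.

(* Main.v *)
Require Import Defs.
From HB Require Import structures.
From mathcomp Require Import all_boot all_order all_algebra.
From mathcomp Require Import complex.
From mathcomp Require Import boolp classical_sets reals.
From mathcomp Require Import spectral.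
From mathcomp Require Import ring lra.

Import Order.TTheory GRing.Theory Num.Theory.

Module M1.
Set Implicit Arguments.
Unset Strict Implicit.
Unset Printing Implicit Defensive.

Local Open Scope ring_scope.
Local Open Scope complex_scope.

Local Notation cRe := complex.Re.
Local Notation cIm := complex.Im.
Section Cabs.
Variable R : realType.
Local Notation C := R[i].

Definition cabs (z : C) : R := cRe `|z|.

Lemma cabsE (z : C) : `|z| = (cabs z)%:C.
Proof. by rewrite /cabs RRe_real // normr_real. Qed.

Lemma cabs_ge0 z : 0 <= cabs z.
Proof. by have := normr_ge0 z; rewrite lecE => /andP[_]. Qed.

Lemma cabs2 z : cabs z ^+ 2 = cRe z ^+ 2 + cIm z ^+ 2.
Proof. by apply: complexI; rewrite add_Re2_Im2 cabsE rmorphXn. Qed.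

Lemma cabsM z w : cabs (z * w) = cabs z * cabs w.
Proof. by apply: complexI; rewrite -cabsE normrM !cabsE rmorphM. Qed.

Lemma cabsD z w : cabs (z + w) <= cabs z + cabs w.
Proof. by have := ler_normD z w; rewrite !cabsE -rmorphD lecR. Qed.

Lemma cabsJ z : cabs (conjc z) = cabs z.
Proof. by apply: complexI; rewrite -!cabsE; exact: (norm_conjC z). Qed.

Lemma Re_le_cabs z : cRe z <= cabs z.
Proof.
have h := cabs2 z; have h0 := cabs_ge0 z.
have : cRe z ^+ 2 <= cabs z ^+ 2 by rewrite h lerDl sqr_ge0.
case: (lerP (cRe z) 0) => [hz|hz] H; first by lra.
by rewrite -(ler_pXn2r (n:=2)) // ?nnegrE ?ltW.
Qed.

Lemma cabs_real (r : R) : cabs r%:C = `|r|.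
Proof. by rewrite /cabs normc_def /= expr0n /= addr0 sqrtr_sqr. Qed.

Lemma cabs_eq0 z : (cabs z == 0) = (z == 0).
Proof.
by rewrite -(inj_eq (@complexI _)) -cabsE normr_eq0.
Qed.

Lemma cabs_sum (I : finType) (f : I -> C) :
  cabs (\sum_i f i) <= \sum_i cabs (f i).
Proof.
elim/big_ind2: _ => //; first by rewrite cabs_real normr0.
move=> a b c d h1 h2; apply: le_trans (cabsD _ _) _; exact: lerD.
Qed.

Lemma conjc_real_eq (r : R) : conjc r%:C = r%:C.
Proof. by rewrite /= oppr0. Qed.

Lemma ge0_real (z : C) : 0 <= z -> z = (cRe z)%:C.
Proof. by case: z => a b; rewrite lecE /= => /andP [/eqP -> _]. Qed.

Lemma conjc_ge0 (z : C) : 0 <= z -> conjc z = z.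
Proof. by move=> /ge0_real ->; rewrite conjc_real_eq. Qed.

Lemma mulcJ_cabs (z : C) : z * conjc z = (cabs z ^+ 2)%:C.
Proof.
case: z => a b; rewrite cabs2 /=; simpc.
by apply/eqP; rewrite eq_complex /=; apply/andP; split; apply/eqP; ring.
Qed.

End Cabs.

Section Basics.
Variables (R : realType) (H : lmodType R[i]) (ip : H -> H -> R[i]).
Hypothesis hip : is_inner_product ip.
Local Notation C := R[i].
Local Notation nrm := (hnorm ip).

Lemma ipDZl (a : C) x y z : ip (a *: x + y) z = a * ip x z + ip y z.
Proof. by case: hip. Qed.
Lemma ipC x y : ip y x = conjc (ip x y).
Proof. by case: hip. Qed.
Lemma ip_ge0 x : 0 <= ip x x.
Proof. by case: hip. Qed.
Lemma ip_eq0 x : ip x x = 0 -> x = 0.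
Proof. by case: hip => _ _ _; apply. Qed.

Lemma ip0l z : ip 0 z = 0.
Proof.
have := ipDZl 1 0 0 z; rewrite scaler0 addr0 mul1r => /eqP.
by move/eqP=> h; rewrite -{1}(addr0 (ip 0 z)) in h; exact: (esym (addrI _ h)).
Qed.
Lemma ipDl x y z : ip (x + y) z = ip x z + ip y z.
Proof. by have := ipDZl 1 x y z; rewrite scale1r mul1r. Qed.
Lemma ipZl a x z : ip (a *: x) z = a * ip x z.
Proof. by rewrite -(addr0 (a *: x)) ipDZl ip0l addr0. Qed.
Lemma ipNl x z : ip (- x) z = - ip x z.
Proof. by rewrite -scaleN1r ipZl mulN1r. Qed.
Lemma ipBl x y z : ip (x - y) z = ip x z - ip y z.
Proof. by rewrite ipDl ipNl. Qed.
Lemma ip0r z : ip z 0 = 0.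
Proof. by rewrite ipC ip0l /= oppr0. Qed.
Lemma ipDr x y z : ip z (x + y) = ip z x + ip z y.
Proof. by rewrite ipC ipDl rmorphD /= -!ipC. Qed.
Lemma ipZr a x z : ip z (a *: x) = conjc a * ip z x.
Proof. by rewrite ipC ipZl rmorphM /= -ipC. Qed.
Lemma ipNr x z : ip z (- x) = - ip z x.
Proof. by rewrite -scaleN1r ipZr /= oppr0 mulN1r. Qed.
Lemma ipBr x y z : ip z (x - y) = ip z x - ip z y.
Proof. by rewrite ipDr ipNr. Qed.

Lemma ip_suml (I : Type) (r : seq I) (P : pred I) (f : I -> H) z :
  ip (\sum_(i <- r | P i) f i) z = \sum_(i <- r | P i) ip (f i) z.
Proof. by apply: (big_morph (fun x => ip x z)); [move=> x y; exact: ipDl | exact: ip0l]. Qed.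
Lemma ip_sumr (I : Type) (r : seq I) (P : pred I) (f : I -> H) z :
  ip z (\sum_(i <- r | P i) f i) = \sum_(i <- r | P i) ip z (f i).
Proof. by apply: (big_morph (fun x => ip z x)); [move=> x y; exact: ipDr | exact: ip0r]. Qed.

Definition n2 x : R := cRe (ip x x).

Lemma ip_n2 x : ip x x = (n2 x)%:C.
Proof. exact/ge0_real/ip_ge0. Qed.

Lemma n2_ge0 x : 0 <= n2 x.
Proof. by rewrite -lecR -ip_n2 ip_ge0. Qed.

Lemma nrm_ge0 x : 0 <= nrm x.
Proof. exact: sqrtr_ge0. Qed.

Lemma nrm2 x : nrm x ^+ 2 = n2 x.
Proof. by rewrite /hnorm sqr_sqrtr // n2_ge0. Qed.

Lemma nrm_eq0 x : nrm x = 0 -> x = 0.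
Proof.
move=> h; apply: ip_eq0; rewrite ip_n2 -nrm2 h expr0n /=; done.
Qed.

Lemma nrm0 : nrm 0 = 0.
Proof. by rewrite /hnorm /n2 ip0l /= sqrtr0. Qed.

Lemma n2D x y : n2 (x + y) = n2 x + n2 y + 2 * cRe (ip x y).
Proof.
rewrite /n2 ipDl !ipDr (ipC x y).
case: (ip x x) => a b; case: (ip y y) => c d; case: (ip x y) => e f.
simpc. rewrite /=. ring.
Qed.

Lemma n2Z (a : C) x : n2 (a *: x) = cabs a ^+ 2 * n2 x.
Proof.
rewrite /n2 ipZl ipZr mulrA mulcJ_cabs ip_n2.
by rewrite -rmorphM.
Qed.

Lemma nrmZ (a : C) x : nrm (a *: x) = cabs a * nrm x.
Proof.
rewrite /hnorm -/(n2 _) n2Z sqrtrM ?sqr_ge0 // sqrtr_sqr.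
by rewrite ger0_norm // cabs_ge0.
Qed.

Lemma nrmN x : nrm (- x) = nrm x.
Proof. by rewrite -scaleN1r nrmZ /cabs normrN1 /= mul1r. Qed.

Lemma CS_sq x y : cabs (ip x y) ^+ 2 <= n2 x * n2 y.
Proof.
have [y0|ny0] := eqVneq (n2 y) 0.
  have -> : y = 0 by apply: ip_eq0; rewrite ip_n2 y0.
  by rewrite ip0r cabs_real normr0 expr0n /= mulr_ge0 ?n2_ge0.
have By : 0 < n2 y by rewrite lt_neqAle eq_sym ny0 n2_ge0.
case E : (ip x y) => [a b].
pose t : C := (- a / n2 y) +i* (- b / n2 y).
have h := n2_ge0 (x + t *: y).
rewrite n2D n2Z ipZr E cabs2 /= in h.
rewrite cabs2 /=.
have e1 : n2 y * (- a / n2 y) = - a by field; lra.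
have e2 : n2 y * (- b / n2 y) = - b by field; lra.
have : 0 <= n2 y * (n2 x + ((- a / n2 y) ^+ 2 + (- (- b / n2 y)) ^+ 2) * n2 y +
     2 * ((- a / n2 y) * a - (- (- b / n2 y)) * b)).
  by apply: mulr_ge0 => //; lra.
have -> : n2 y * (n2 x + ((- a / n2 y) ^+ 2 + (- (- b / n2 y)) ^+ 2) * n2 y +
     2 * ((- a / n2 y) * a - (- (- b / n2 y)) * b)) =
     n2 y * n2 x - (a ^+ 2 + b ^+ 2) by field; lra.
lra.
Qed.

Lemma CS x y : cabs (ip x y) <= nrm x * nrm y.
Proof.
rewrite -(ler_pXn2r (n:=2)) // ?nnegrE ?cabs_ge0 ?mulr_ge0 ?nrm_ge0 //.
by rewrite exprMn !nrm2 CS_sq.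
Qed.

Lemma nrmD x y : nrm (x + y) <= nrm x + nrm y.
Proof.
rewrite -(ler_pXn2r (n:=2)) // ?nnegrE ?addr_ge0 ?nrm_ge0 //.
rewrite nrm2 n2D sqrrD !nrm2.
have := le_trans (Re_le_cabs (ip x y)) (CS x y).
lra.
Qed.

Lemma nrmB x y : nrm (x - y) <= nrm x + nrm y.
Proof. by rewrite -(nrmN y); exact: nrmD. Qed.

Lemma nrm_sum (I : finType) (f : I -> H) :
  nrm (\sum_i f i) <= \sum_i nrm (f i).
Proof.
elim/big_ind2: _ => //; first by rewrite nrm0.
move=> a b c d h1 h2; apply: le_trans (nrmD _ _) _; exact: lerD.
Qed.

End Basics.

End M1.
Import M1.

Module M2.
Set Implicit Arguments.
Unset Strict Implicit.
Unset Printing Implicit Defensive.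
Import M1.

Local Open Scope ring_scope.
Local Open Scope complex_scope.
Local Notation cRe := complex.Re.
Local Notation cIm := complex.Im.

Definition adjm (R : realType) m n (M : 'M[R[i]]_(m, n)) : 'M[R[i]]_(n, m) :=
  map_mx conjc M^T.

Section Act.
Variables (R : realType) (H : lmodType R[i]) (ip : H -> H -> R[i]).
Hypothesis hip : is_inner_product ip.
Local Notation C := R[i].
Local Notation nrm := (hnorm ip).
Variable l : nat.

Definition act (M : 'M[C]_l) (f : 'I_l -> H) : 'I_l -> H :=
  fun i => \sum_j M i j *: f j.
Definition gram (f : 'I_l -> H) : 'M[C]_l := \matrix_(i, j) ip (f i) (f j).

Lemma adjmE (M : 'M[C]_l) i j : adjm M i j = conjc (M j i).
Proof. by rewrite !mxE. Qed.

Lemma act_mul M N f i : act M (act N f) i = act (M *m N) f i.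
Proof.
rewrite /act; under eq_bigr do rewrite scaler_sumr.
rewrite exchange_big /=; apply: eq_bigr => k _.
by rewrite mxE scaler_suml; apply: eq_bigr => j _; rewrite scalerA.
Qed.

Lemma act1 f i : act 1%:M f i = f i.
Proof.
rewrite /act (bigD1 i) //= big1 ?addr0 => [|j hj]; first by rewrite mxE eqxx scale1r.
by rewrite mxE eq_sym (negPf hj) scale0r.
Qed.

Lemma act_diag (d : 'rV[C]_l) f i : act (diag_mx d) f i = d 0 i *: f i.
Proof.
rewrite /act (bigD1 i) //= big1 ?addr0 => [|j hj]; first by rewrite mxE eqxx mulr1n.
by rewrite mxE eq_sym (negPf hj) mulr0n scale0r.
Qed.

Lemma gram_act M f : gram (act M f) = M *m gram f *m adjm M.
Proof.
apply/matrixP => i k; rewrite !mxE /act (ip_suml hip).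
under eq_bigr do rewrite (ipZl hip) (ip_sumr hip) mulr_sumr.
under [RHS]eq_bigr do rewrite !mxE mulr_suml.
rewrite exchange_big /=; apply: eq_bigr => j _; apply: eq_bigr => m _.
by rewrite (ipZr hip) !mxE; ring.
Qed.

Lemma pair_act M f g :
  \sum_i ip (act M f i) (g i) = \sum_j ip (f j) (act (adjm M) g j).
Proof.
rewrite /act; under eq_bigr do rewrite (ip_suml hip).
under [RHS]eq_bigr do rewrite (ip_sumr hip).
rewrite exchange_big /=; apply: eq_bigr => j _; apply: eq_bigr => i _.
by rewrite (ipZl hip) (ipZr hip) adjmE conjcK.
Qed.

Definition linH (x : H -> H) := forall (a : C) u w, x (a *: u + w) = a *: x u + x w.

Lemma linH0 x : linH x -> x 0 = 0.
Proof.
move=> hx; have := hx 1 0 0. rewrite scaler0 addr0 scale1r => h.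
by rewrite -{1}(addr0 (x 0)) in h; exact: (esym (addrI _ h)).
Qed.
Lemma linHD x : linH x -> forall u w, x (u + w) = x u + x w.
Proof. by move=> hx u w; have := hx 1 u w; rewrite !scale1r. Qed.
Lemma linHZ x : linH x -> forall a u, x (a *: u) = a *: x u.
Proof. by move=> hx a u; have := hx a u 0; rewrite (linH0 hx) !addr0. Qed.
Lemma linH_sum x : linH x -> forall (I : Type) (r : seq I) (P : pred I) (f : I -> H),
  x (\sum_(i <- r | P i) f i) = \sum_(i <- r | P i) x (f i).
Proof.
move=> hx I r P f; apply: (big_morph x); [exact: linHD | exact: linH0].
Qed.

Lemma lin_act x M f i : linH x -> x (act M f i) = act M (fun j => x (f j)) i.
Proof.
move=> hx; rewrite /act linH_sum //; apply: eq_bigr => j _; exact: linHZ.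
Qed.

Lemma act_adjm_unitary (V : 'M[C]_l) f i : adjm V *m V = 1%:M ->
  act (adjm V) (act V f) i = f i.
Proof. by move=> h; rewrite act_mul h act1. Qed.

End Act.

End M2.
Import M2.

Module M3.
Set Implicit Arguments.
Unset Strict Implicit.
Unset Printing Implicit Defensive.
Import M1.
Import M2.

Local Open Scope ring_scope.

Local Notation cRe := complex.Re.
Local Notation cIm := complex.Im.

Section Mx.
Variables (R : realType) (l : nat).
Local Notation C := R[i].
Implicit Types (A B : 'M[C]_l).

Definition qf A (v : 'cV[C]_l) : C := ((map_mx conjc v)^T *m A *m v) ord0 ord0.

Lemma qfE A v : qf A v = \sum_a \sum_b conjc (v a ord0) * A a b * v b ord0.
Proof.
rewrite /qf mxE; under eq_bigr do rewrite mxE mulr_suml.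
rewrite exchange_big /=; apply: eq_bigr => a _; apply: eq_bigr => b _.
by rewrite !mxE.
Qed.

Lemma sumd (i : 'I_l) (F : 'I_l -> C) : \sum_a (a == i)%:R * F a = F i.
Proof.
rewrite (bigD1 i) //= eqxx mul1r big1 ?addr0 // => a /negPf ->; by rewrite mul0r.
Qed.
Lemma sumd' (i : 'I_l) (F : 'I_l -> C) : \sum_a F a * (a == i)%:R = F i.
Proof. by rewrite -[RHS](sumd i); apply: eq_bigr => a _; rewrite mulrC. Qed.

Definition evec (i j : 'I_l) (c : C) : 'cV[C]_l :=
  \col_k ((k == i)%:R + c * (k == j)%:R).

Lemma sum_comb (i j : 'I_l) (c : C) (F : 'I_l -> C) :
  \sum_b F b * ((b == i)%:R + c * (b == j)%:R) = F i + c * F j.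
Proof.
under eq_bigr do rewrite mulrDr.
rewrite big_split /= sumd'; congr (_ + _).
rewrite (eq_bigr (fun b => c * (F b * (b == j)%:R))) => [|b _]; last by ring.
by rewrite -mulr_sumr sumd'.
Qed.

Lemma sum_combl (i j : 'I_l) (c : C) (F : 'I_l -> C) :
  \sum_b ((b == i)%:R + c * (b == j)%:R) * F b = F i + c * F j.
Proof. by rewrite -(sum_comb i j c F); apply: eq_bigr => b _; rewrite mulrC. Qed.

Lemma qf_evec A i j c :
  qf A (evec i j c) = A i i + c * A i j + conjc c * A j i + c * conjc c * A j j.
Proof.
rewrite qfE.
have hc : forall k : 'I_l, conjc ((k == i)%:R + c * (k == j)%:R) =
   (k == i)%:R + conjc c * (k == j)%:R.
  by move=> k; rewrite rmorphD rmorphM /= !conjc_nat.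
rewrite (eq_bigr (fun a => ((a == i)%:R + conjc c * (a == j)%:R) *
    \sum_b A a b * ((b == i)%:R + c * (b == j)%:R))) => [|a _]; last first.
  rewrite mulr_sumr; apply: eq_bigr => b _; rewrite !mxE hc; ring.
under eq_bigr do rewrite sum_comb.
rewrite sum_combl; ring.
Qed.

Lemma qf_sub A B v : qf (A - B) v = qf A v - qf B v.
Proof. rewrite /qf mulmxBr mulmxBl [LHS]mxE; congr (_ + _); by rewrite mxE. Qed.

Lemma qf_adj A v : qf (adjm A) v = conjc (qf A v).
Proof.
rewrite !qfE rmorph_sum /= exchange_big /=; apply: eq_bigr => a _.
rewrite rmorph_sum; apply: eq_bigr => b _.
by rewrite adjmE !rmorphM /= conjcK; ring.
Qed.

Lemma qf0_eq0 B : (forall v, qf B v = 0) -> B = 0.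
Proof.
move=> h; have hd : forall i, B i i = 0.
  move=> i; have := h (evec i i 0); rewrite qf_evec.
  by rewrite conjc0 !mul0r !addr0.
apply/matrixP => i j; rewrite mxE.
have h1 := h (evec i j 1); rewrite qf_evec !hd conjc1 !mul1r in h1.
have h2 := h (evec i j 'i%C); rewrite qf_evec !hd in h2.
have hji : B j i = - B i j.
  by apply: (addrI (B i j)); rewrite subrr -h1; ring.
have ei : conjc 'i%C = - 'i%C :> C by apply/eqP; rewrite eq_complex /= oppr0 !eqxx.
rewrite hji ei in h2.
have : (2%:R * 'i%C) * B i j = 0 by rewrite -[RHS]h2; ring.
move/eqP; rewrite mulf_eq0 => /orP [|/eqP //].
rewrite mulf_eq0 pnatr_eq0 /= => h3; move: h3; rewrite eq_complex /= => /andP [_ /eqP h4].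
by move: h4 => /eqP; rewrite oner_eq0.
Qed.

Lemma psd_herm A : psd A -> adjm A = A.
Proof.
move=> hA; apply/eqP; rewrite -subr_eq0; apply/eqP; apply: qf0_eq0 => v.
by rewrite qf_sub qf_adj (conjc_ge0 (hA v)) subrr.
Qed.

Lemma psd_tr A : psd A -> psd A^T.
Proof.
move=> hA v; have := hA (map_mx conjc v); congr (_ <= _).
rewrite -!/(qf _ _) !qfE exchange_big /=; apply: eq_bigr => a _; apply: eq_bigr => b _.
by rewrite !mxE conjcK; ring.
Qed.

End Mx.

End M3.
Import M3.

Module M4.
Set Implicit Arguments.
Unset Strict Implicit.
Unset Printing Implicit Defensive.
Import M1.
Import M2.
Import M3.

Local Open Scope ring_scope.
Local Notation cRe := complex.Re.
Local Notation cIm := complex.Im.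

Section Dec.
Variables (R : realType) (l : nat).
Local Notation C := R[i].
Implicit Types (A B : 'M[C]_l).

Lemma adjmE' m n (M : 'M[C]_(m, n)) : adjm M = (M ^T ^ Num.conj)%sesqui.
Proof. by []. Qed.

Lemma psd_dec A : psd A -> exists V : 'M[C]_l, exists d : 'rV[C]_l,
  [/\ V *m adjm V = 1%:M, adjm V *m V = 1%:M, (forall i, 0 <= d 0 i) &
      A = adjm V *m diag_mx d *m V].
Proof.
move=> hA; have hH := psd_herm hA.
have nA : A \is normalmx.
  apply/normalmxP; rewrite -adjmE' hH //.
have := orthomx_spectralP nA.
move: (spectral_unitarymx A) => /unitarymxP; rewrite -adjmE'.
set V := spectralmx A; set d := spectral_diag A => hV.
rewrite invmx_unitary ?spectral_unitarymx // -adjmE' => hAe.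
have hV' : adjm V *m V = 1%:M by apply: mulmx1C.
exists V, d; split => // i.
have key : V *m A *m adjm V = diag_mx d.
  by rewrite hAe !mulmxA hV mul1mx -!mulmxA hV mulmx1.
have := hA (col i (adjm V)).
have -> : ((map_mx conjc (col i (adjm V)))^T *m A *m col i (adjm V)) ord0 ord0 =
     (V *m A *m adjm V) i i.
  rewrite !mxE; apply: eq_bigr => b _; rewrite !mxE; congr (_ * _).
  by apply: eq_bigr => a _; rewrite !mxE conjcK.
by rewrite key mxE eqxx mulr1n.
Qed.

Lemma psd_sqrt_exists A : psd A -> exists S, psd S /\ S *m S = A.
Proof.
move=> /psd_dec [V [d [hV hV' hd ->]]].
pose s : 'rV[C]_l := \row_j sqrtC (d 0 j).
exists (adjm V *m diag_mx s *m V); split.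
  move=> v.
  have -> : ((map_mx conjc v)^T *m (adjm V *m diag_mx s *m V) *m v) ord0 ord0 =
      \sum_k (sqrtC (d 0 k) * ((V *m v) k ord0 * conjc ((V *m v) k ord0))).
    rewrite -!mulmxA mulmxA.
    have -> : (map_mx conjc v)^T *m adjm V = (map_mx conjc (V *m v))^T.
      apply/matrixP => a b; rewrite !mxE rmorph_sum; apply: eq_bigr => k _.
      by rewrite !mxE rmorphM mulrC.
    rewrite mul_diag_mx !mxE; apply: eq_bigr => k _; rewrite !mxE; ring.
  apply: sumr_ge0 => k _; apply: mulr_ge0; first by rewrite sqrtC_ge0.
  exact: mul_conjC_ge0.
rewrite -!mulmxA (mulmxA V) hV mul1mx (mulmxA (diag_mx s)) mulmx_diag.
congr (_ *m (_ *m _)); congr diag_mx; apply/rowP => j; rewrite !mxE.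
by rewrite -expr2 sqrtCK.
Qed.

Lemma psd_sqrt_spec A : psd A -> psd (psd_sqrt A) /\ psd_sqrt A *m psd_sqrt A = A.
Proof.
move=> hA; rewrite /psd_sqrt; case: pselect => [e|ne].
  by case: (cid e).
by exfalso; apply: ne; exact: psd_sqrt_exists.
Qed.

End Dec.

End M4.
Import M4.

Module M5.
Set Implicit Arguments.
Unset Strict Implicit.
Unset Printing Implicit Defensive.
Import M1.
Import M2.
Import M3.
Import M4.

Local Open Scope ring_scope.
Local Open Scope complex_scope.
Local Notation cRe := complex.Re.
Local Notation cIm := complex.Im.

Section Helpers.
Variables (R : realType) (l : nat).
Local Notation C := R[i].

Lemma adjmK (M : 'M[C]_l) : adjm (adjm M) = M.
Proof. by apply/matrixP => i j; rewrite !adjmE conjcK. Qed.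

Lemma adjmM (A B : 'M[C]_l) : adjm (A *m B) = adjm B *m adjm A.
Proof.
apply/matrixP => i j; rewrite adjmE !mxE rmorph_sum; apply: eq_bigr => k _.
by rewrite !mxE rmorphM mulrC.
Qed.

Lemma cRe_sum (I : Type) (r : seq I) (P : pred I) (F : I -> C) :
  cRe (\sum_(i <- r | P i) F i) = \sum_(i <- r | P i) cRe (F i).
Proof. by apply: (big_morph (@complex.Re R)) => // [[a b] [c d]]. Qed.

Lemma real_sum (I : Type) (r : seq I) (P : pred I) (F : I -> R) :
  (\sum_(i <- r | P i) F i)%:C = \sum_(i <- r | P i) (F i)%:C :> C.
Proof. by rewrite rmorph_sum. Qed.

Lemma sumd_sym (i : 'I_l) (F : 'I_l -> C) : \sum_a F a * (i == a)%:R = F i.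
Proof. by rewrite -(sumd' i F); apply: eq_bigr => a _; rewrite eq_sym. Qed.

Lemma unit_rows (Y : 'M[C]_l) (c : 'I_l -> C) : Y *m adjm Y = 1%:M ->
  \sum_m cabs (\sum_i c i * Y i m) ^+ 2 = \sum_i cabs (c i) ^+ 2.
Proof.
move=> hY; apply: (@complexI R); rewrite !real_sum.
under eq_bigr do rewrite -mulcJ_cabs rmorph_sum mulr_suml.
under [RHS]eq_bigr do rewrite -mulcJ_cabs.
rewrite exchange_big /=; apply: eq_bigr => i _.
under eq_bigr do rewrite mulr_sumr.
rewrite exchange_big /=.
transitivity (\sum_j c i * conjc (c j) * (Y *m adjm Y) i j).
  apply: eq_bigr => j _; rewrite !mxE mulr_sumr; apply: eq_bigr => m _.
  by rewrite rmorphM /= adjmE; ring.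
by rewrite hY; under eq_bigr do rewrite mxE; rewrite sumd_sym.
Qed.

Lemma unit_col (Y : 'M[C]_l) m : adjm Y *m Y = 1%:M ->
  \sum_i cabs (Y i m) ^+ 2 = 1.
Proof.
move=> hY; apply: (@complexI R); rewrite real_sum rmorph1.
under eq_bigr do rewrite -mulcJ_cabs.
have := congr1 (fun M : 'M[C]_l => M m m) hY; rewrite /= [in X in _ = X -> _]mxE eqxx mulr1n => <-.
by rewrite mxE; apply: eq_bigr => i _; rewrite adjmE mulrC.
Qed.

End Helpers.

Section ON.
Variables (R : realType) (H : lmodType R[i]) (ip : H -> H -> R[i]).
Hypothesis hip : is_inner_product ip.
Local Notation C := R[i].
Local Notation nrm := (hnorm ip).
Variable l : nat.

Definition ON (g : 'I_l -> H) (p : 'I_l -> bool) :=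
  forall i j, ip (g i) (g j) = ((i == j) && p i)%:R.

Lemma ON_n2 g p (c : 'I_l -> C) : ON g p ->
  n2 ip (\sum_i c i *: g i) = \sum_i (p i)%:R * cabs (c i) ^+ 2.
Proof.
move=> hg; apply: (@complexI R); rewrite -ip_n2 // real_sum (ip_suml hip).
apply: eq_bigr => i _; rewrite (ipZl hip) (ip_sumr hip).
under eq_bigr do rewrite (ipZr hip) hg.
have -> : \sum_j conjc (c j) * ((i == j) && p i)%:R =
   \sum_j (conjc (c j) * (p i)%:R) * (i == j)%:R.
  by apply: eq_bigr => j _; rewrite -mulrA -natrM mulnb andbC.
rewrite sumd_sym rmorphM /= -mulcJ_cabs /=.
by case: (p i) => /=; rewrite ?mulr1 ?mulr0 ?mul1r ?mul0r // rmorph0.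
Qed.

Lemma ON_n2_le g p (c : 'I_l -> C) : ON g p ->
  n2 ip (\sum_i c i *: g i) <= \sum_i cabs (c i) ^+ 2.
Proof.
move=> hg; rewrite (ON_n2 c hg); apply: ler_sum => i _.
by case: (p i); rewrite ?mul1r ?mul0r ?sqr_ge0.
Qed.

Lemma ON_zero g p i : ON g p -> ~~ p i -> g i = 0.
Proof. by move=> hg hp; apply: (ip_eq0 hip); rewrite hg eqxx (negPf hp). Qed.

Lemma bessel g p z : ON g p ->
  \sum_i cabs (ip z (g i)) ^+ 2 <= n2 ip z.
Proof.
move=> hg; set c := fun i => ip z (g i).
have hp : n2 ip (\sum_i c i *: g i) = \sum_i cabs (c i) ^+ 2.
  rewrite (ON_n2 c hg); apply: eq_bigr => i _; case hpi : (p i); first by rewrite mul1r.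
  by rewrite /c (ON_zero hg) ?hpi // (ip0r hip) /cabs normr0 /= expr0n mulr0.
have hz : cRe (ip z (\sum_i c i *: g i)) = \sum_i cabs (c i) ^+ 2.
  rewrite (ip_sumr hip) cRe_sum; apply: eq_bigr => i _.
  rewrite (ipZr hip) /c mulrC mulcJ_cabs /=; done.
have := n2_ge0 hip (z - \sum_i c i *: g i).
rewrite n2D //.
have -> : n2 ip (- \sum_i c i *: g i) = n2 ip (\sum_i c i *: g i).
  by rewrite -scaleN1r n2Z // /cabs normrN1 /= expr1n mul1r.
rewrite hp (ipNr hip).
have -> : cRe (- ip z (\sum_i c i *: g i)) = - cRe (ip z (\sum_i c i *: g i)).
  by case: (ip z _).
rewrite hz; lra.
Qed.

End ON.

End M5.
Import M5.

Module M6.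
Set Implicit Arguments.
Unset Strict Implicit.
Unset Printing Implicit Defensive.
Import M1.
Import M2.
Import M3.
Import M4.
Import M5.

Local Open Scope ring_scope.
Local Open Scope complex_scope.
Local Notation cRe := complex.Re.
Local Notation cIm := complex.Im.

Section Core.
Variables (R : realType) (H : lmodType R[i]) (ip : H -> H -> R[i]).
Hypothesis hip : is_inner_product ip.
Local Notation C := R[i].
Local Notation nrm := (hnorm ip).
Variable l : nat.

Lemma conj_sq (V : 'M[C]_l) (d : 'rV[C]_l) : V *m adjm V = 1%:M ->
  V *m ((adjm V *m diag_mx d *m V) *m (adjm V *m diag_mx d *m V)) *m adjm V
  = diag_mx d *m diag_mx d.
Proof.
move=> hV.
have e : forall A B : 'M[C]_l, A *m V *m (adjm V *m B) = A *m B.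
  by move=> A B; rewrite mulmxA -(mulmxA A) hV mulmx1.
rewrite -!mulmxA (mulmxA V) hV mul1mx.
rewrite !mulmxA -(mulmxA _ V (adjm V)) hV mulmx1.
by rewrite mulmx1.
Qed.

Lemma dec_gram (V : 'M[C]_l) (d : 'rV[C]_l) (M : 'M[C]_l) (f : 'I_l -> H) :
  V *m adjm V = 1%:M -> M = adjm V *m diag_mx d *m V -> gram ip f = M *m M ->
  forall i j, ip (act V f i) (act V f j) = (i == j)%:R * (d 0 i * d 0 i).
Proof.
move=> hV hM hf i j.
have := congr1 (fun N : 'M[C]_l => N i j) (gram_act hip V f).
rewrite /= [in X in X = _ -> _]mxE => ->.
rewrite hf hM.
have -> : V *m (adjm V *m diag_mx d *m V *m (adjm V *m diag_mx d *m V)) *m adjm V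
   = diag_mx d *m diag_mx d.
  exact: conj_sq.
by rewrite mulmx_diag !mxE; case: (i == j); rewrite ?mulr1n ?mulr0n ?mul1r ?mul0r.
Qed.

Definition nz (d : 'I_l -> C) (h : 'I_l -> H) : 'I_l -> H :=
  fun i => if d i == 0 then 0 else (d i)^-1 *: h i.

Lemma nz_ON (d : 'I_l -> C) (h : 'I_l -> H) :
  (forall i, 0 <= d i) ->
  (forall i j, ip (h i) (h j) = (i == j)%:R * (d i * d i)) ->
  ON ip (nz d h) (fun i => d i != 0) /\ (forall i, h i = d i *: nz d h i).
Proof.
move=> hd hh; split.
  move=> i j; rewrite /nz; case: eqP => [di0|/eqP di0].
    by rewrite (ip0l hip) andbF.
  case: eqP => [dj0|/eqP dj0].
    by rewrite (ip0r hip); case: eqVneq => // ij; subst j; rewrite dj0 eqxx in di0.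
  rewrite (ipZl hip) (ipZr hip) hh /= andbT.
  case: (eqVneq i j) => [ij|ij]; last by rewrite /= mulr0n mul0r !mulr0.
  subst j; rewrite /= mulr1n mul1r conjc_inv (conjc_ge0 (hd i)).
  by rewrite mulrA -mulrA (mulrA _ (d i)) mulVf // mul1r mulVf.
move=> i; rewrite /nz; case: eqP => [di0|/eqP di0].
  by rewrite scaler0; apply: (ip_eq0 hip); rewrite hh di0 !mulr0.
by rewrite scalerA mulfV // scale1r.
Qed.

Variables (u v : 'I_l -> H) (T Rm : 'M[C]_l).
Hypotheses (hT : psd T) (hTu : gram ip u = T *m T).
Hypotheses (hR : psd Rm) (hRx : gram ip (act T v) = Rm *m Rm).

Lemma core_setup : exists (Y : 'M[C]_l) (g : 'I_l -> H) (p : 'I_l -> bool)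
   (rho : 'I_l -> H) (e : 'I_l -> C),
  Y *m adjm Y = 1%:M /\ adjm Y *m Y = 1%:M /\ ON ip g p /\ (forall m, 0 <= e m) /\
      (forall m n, ip (rho m) (rho n) = (m == n)%:R * (e m * e m)) /\
      (forall x, linH x ->
         \sum_j ip (x (u j)) (v j) = \sum_i ip (x (g i)) (act Y rho i)) /\
      (forall i, ~~ p i -> act Y rho i = 0) /\
      \tr Rm = \sum_m e m.
Proof.
have [V [d [hV hV' hd hTe]]] := psd_dec hT.
have [W [e [hW hW' he hRe]]] := psd_dec hR.
have hh := dec_gram hV hTe hTu.
have [hON hg] := nz_ON (fun i => hd i) hh.
set g := nz _ _ in hON hg.
have hr := dec_gram hW hRe hRx.
set xi := act T v in hr.
set Y := V *m adjm W.
have hY : Y *m adjm Y = 1%:M.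
  by rewrite /Y adjmM adjmK !mulmxA -(mulmxA V) hW' mulmx1 hV.
have hY' : adjm Y *m Y = 1%:M by apply: mulmx1C.
have hVT : V *m T = diag_mx d *m V.
  by rewrite hTe !mulmxA hV mul1mx.
have hxi : forall i, act Y (act W xi) i = d 0 i *: act V v i.
  move=> i; rewrite act_mul /Y -mulmxA hW' mulmx1 /xi act_mul hVT -act_mul act_diag.
  done.
exists Y, g, (fun i => d 0 i != 0), (act W xi), (fun m => e 0 m); do !split => //.
- move=> x hx.
  transitivity (\sum_j ip (x (act (adjm V) (act V u) j)) (v j)).
    by apply: eq_bigr => j _; rewrite (act_adjm_unitary _ _ hV').
  under eq_bigr do rewrite (lin_act _ _ _ hx).
  rewrite (pair_act hip) adjmK; apply: eq_bigr => i _.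
  rewrite hxi hg (linHZ hx) (ipZl hip) (ipZr hip) (conjc_ge0 (hd i)) //.
- by move=> i /negPn /eqP hi; rewrite hxi hi scale0r.
- rewrite hRe mxtrace_mulC mulmxA hW mul1mx mxtrace_diag //.
Qed.

End Core.

End M6.
Import M6.

Module M7.
Set Implicit Arguments.
Unset Strict Implicit.
Unset Printing Implicit Defensive.
Import M1.
Import M2.
Import M3.
Import M4.
Import M5.
Import M6.

Local Open Scope ring_scope.
Local Open Scope complex_scope.
Local Notation cRe := complex.Re.
Local Notation cIm := complex.Im.

Section Core2.
Variables (R : realType) (H : lmodType R[i]) (ip : H -> H -> R[i]).
Hypothesis hip : is_inner_product ip.
Local Notation C := R[i].
Local Notation nrm := (hnorm ip).
Variable l : nat.

Lemma nrm_of (w : H) (c : C) : 0 <= c -> ip w w = c * c -> nrm w = cRe c.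
Proof.
move=> hc hw; rewrite /hnorm hw (ge0_real hc) -rmorphM /= sqrtr_sqr ger0_norm //.
by rewrite -lecR -(ge0_real hc).
Qed.

Lemma nrm_le1 (w : H) : n2 ip w <= 1 -> nrm w <= 1.
Proof.
move=> h; rewrite -(ler_pXn2r (n:=2)) // ?nnegrE ?nrm_ge0 // expr1n nrm2 //.
Qed.

Lemma nrm_le (w z : H) : n2 ip w <= n2 ip z -> nrm w <= nrm z.
Proof. by move=> h; rewrite /hnorm ler_sqrt // n2_ge0. Qed.

Variables (u v : 'I_l -> H) (T Rm : 'M[C]_l).
Hypotheses (hT : psd T) (hTu : gram ip u = T *m T).
Hypotheses (hR : psd Rm) (hRx : gram ip (act T v) = Rm *m Rm).

Lemma core_le x : linH x -> (forall z, nrm (x z) <= nrm z) ->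
  cabs (\sum_j ip (x (u j)) (v j)) <= cRe (\tr Rm).
Proof.
move=> hx hxb.
have [Y [g [p [rho [e [hY [hY' [hON [he [hrho [hkey [hzero htr]]]]]]]]]]]] :=
  core_setup hip hT hTu hR hRx.
rewrite hkey // htr cRe_sum.
rewrite -[Y in act Y rho]adjmK -(pair_act hip).
under eq_bigr do rewrite -(lin_act _ _ _ hx).
apply: le_trans (cabs_sum _) _; apply: ler_sum => m _.
apply: le_trans (CS hip _ _) _.
have hrm : ip (rho m) (rho m) = e m * e m by rewrite hrho eqxx mul1r.
rewrite (nrm_of (he m) hrm).
rewrite -[X in _ <= X]mul1r; apply: ler_wpM2r; first by rewrite -lecR -(ge0_real (he m)).
apply: le_trans (hxb _) _; apply: nrm_le1.
apply: le_trans (ON_n2_le hip _ hON) _.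
rewrite -(unit_col m hY'); apply: ler_sum => i _.
by rewrite adjmE cabsJ.
Qed.

Lemma core_eq : exists x, linH x /\ (forall z, nrm (x z) <= nrm z) /\
  \sum_j ip (x (u j)) (v j) = (cRe (\tr Rm))%:C.
Proof.
have [Y [g [p [rho [e [hY [hY' [hON [he [hrho [hkey [hzero htr]]]]]]]]]]]] :=
  core_setup hip hT hTu hR hRx.
have [hON' hr] := nz_ON hip he hrho.
set r := nz e rho in hON' hr.
set w := act Y r.
pose x := fun z => \sum_i ip z (g i) *: w i.
have hx : linH x.
  move=> a z z'; rewrite /x.
  under eq_bigr do rewrite (ipDZl hip) scalerDl -scalerA.
  by rewrite big_split /= scaler_sumr.
exists x; split => //; split.
  move=> z; apply: nrm_le.
  have -> : x z = \sum_m (\sum_i ip z (g i) * Y i m) *: r m.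
    rewrite /x /w /act; under eq_bigr do rewrite scaler_sumr.
    rewrite exchange_big /=; apply: eq_bigr => m _.
    by rewrite scaler_suml; apply: eq_bigr => i _; rewrite scalerA.
  apply: le_trans (ON_n2_le hip _ hON') _.
  rewrite (unit_rows (fun i => ip z (g i)) hY).
  exact: bessel hON.
rewrite hkey //.
transitivity (\sum_i ip (w i) (act Y rho i)).
  apply: eq_bigr => i _; rewrite /x (ip_suml hip).
  under eq_bigr do rewrite (ipZl hip) hON.
  case hp : (p i).
    under eq_bigr do rewrite andbT mulrC.
    by rewrite sumd_sym.
  rewrite hzero ?hp // (ip0r hip) big1 // => k _; by rewrite andbF mul0r.
rewrite /w (pair_act hip) .
under eq_bigr do rewrite (act_adjm_unitary _ _ hY').
have he2 : forall m, ip (r m) (rho m) = e m.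
  move=> m; rewrite [rho m]hr (ipZr hip) (conjc_ge0 (he m)) hON' eqxx /=.
  by case: eqP => [->|_]; rewrite ?mulr0 ?mulr1.
under eq_bigr do rewrite he2.
rewrite -htr; apply: ge0_real.
by rewrite htr; apply: sumr_ge0 => m _; exact: he.
Qed.

End Core2.

End M7.
Import M7.

Module M8.
Set Implicit Arguments.
Unset Strict Implicit.
Unset Printing Implicit Defensive.
Import M1.
Import M2.
Import M3.
Import M4.
Import M5.
Import M6.
Import M7.

Local Open Scope ring_scope.
Local Open Scope complex_scope.
Local Open Scope classical_set_scope.
Local Notation cRe := complex.Re.
Local Notation cIm := complex.Im.

Lemma arch (R : realType) (x : R) : exists N : nat, x < N%:R.
Proof.
case: (lerP 0 x) => hx; first by exists (Num.Def.archi_bound x); exact: archi_boundP.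
by exists 0%N.
Qed.

Section Riesz.
Variables (R : realType) (H : lmodType R[i]) (ip : H -> H -> R[i]).
Hypothesis hH : is_hilbert ip.
Local Notation C := R[i].
Local Notation nrm := (hnorm ip).

Let hip : is_inner_product ip := proj1 hH.
Let hc : hcomplete ip := proj2 hH.

Lemma n2_par a b : n2 ip (a + b) + n2 ip (a - b) = 2 * n2 ip a + 2 * n2 ip b.
Proof.
rewrite !(n2D hip) (ipNr hip).
have -> : n2 ip (- b) = n2 ip b by rewrite -scaleN1r (n2Z hip) /cabs normrN1 /= expr1n mul1r.
have -> : cRe (- ip a b) = - cRe (ip a b) by case: (ip a b).
lra.
Qed.

Lemma min_orth (w y : H) : (forall t : C, n2 ip w <= n2 ip (w + t *: y)) ->
  ip w y = 0.
Proof.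
move=> hmin.
have [y0|ny0] := eqVneq (n2 ip y) 0.
  have -> : y = 0 by apply: (ip_eq0 hip); rewrite (ip_n2 hip) y0.
  exact: (ip0r hip).
have By : 0 < n2 ip y by rewrite lt_neqAle eq_sym ny0 (n2_ge0 hip).
case E : (ip w y) => [a b].
pose t : C := (- a / n2 ip y) +i* (- b / n2 ip y).
have h := hmin t.
rewrite (n2D hip) (n2Z hip) (ipZr hip) E cabs2 /= in h.
have : 0 <= n2 ip y * (((- a / n2 ip y) ^+ 2 + (- (- b / n2 ip y)) ^+ 2) * n2 ip y +
     2 * ((- a / n2 ip y) * a - (- (- b / n2 ip y)) * b)).
  by apply: mulr_ge0 => //; lra.
have -> : n2 ip y * (((- a / n2 ip y) ^+ 2 + (- (- b / n2 ip y)) ^+ 2) * n2 ip y +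
     2 * ((- a / n2 ip y) * a - (- (- b / n2 ip y)) * b)) =
     - (a ^+ 2 + b ^+ 2) by field; lra.
move=> hab.
have ha : a = 0 by nra.
have hb : b = 0 by nra.
by rewrite ha hb.
Qed.

Variable phi : H -> C.
Hypothesis hphi : forall a x y, phi (a *: x + y) = a * phi x + phi y.
Variable M : R.
Hypothesis hM : forall x, cabs (phi x) <= M * nrm x.

Lemma phi0 : phi 0 = 0.
Proof.
have := hphi 1 0 0; rewrite scaler0 addr0 mul1r => h.
by rewrite -{1}(addr0 (phi 0)) in h; exact: (esym (addrI _ h)).
Qed.
Lemma phiD x y : phi (x + y) = phi x + phi y.
Proof. by have := hphi 1 x y; rewrite scale1r mul1r. Qed.
Lemma phiZ a x : phi (a *: x) = a * phi x.
Proof. by have := hphi a x 0; rewrite !addr0 phi0 addr0. Qed.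
Lemma phiN x : phi (- x) = - phi x.
Proof. by rewrite -scaleN1r phiZ mulN1r. Qed.
Lemma phiB x y : phi (x - y) = phi x - phi y.
Proof. by rewrite phiD phiN. Qed.

Lemma riesz : exists y, forall x, phi x = ip x y.
Proof.
have [phi_eq0|] := pselect (forall x, phi x = 0).
  by exists 0 => x; rewrite phi_eq0 (ip0r hip).
move=> /existsNP [x1 /eqP hx1].
pose z0 := (phi x1)^-1 *: x1.
have hz0 : phi z0 = 1 by rewrite phiZ mulVf.
pose M' := Num.max M 0.
have hM' : forall x, cabs (phi x) <= M' * nrm x.
  move=> x; apply: le_trans (hM x) _; apply: ler_wpM2r; first exact: nrm_ge0.
  by rewrite /M' le_max lexx.
have hM'0 : 0 <= M' by rewrite /M' le_max lexx orbT.
pose E := [set nrm (z0 - k) | k in [set k : H | phi k = 0]].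
have hE0 : E !=set0 by exists (nrm (z0 - 0)), 0 => //; exact: phi0.
have hElb : has_lbound E by exists 0 => _ [k _ <-]; exact: nrm_ge0.
have hinf : has_inf E by split.
set del := inf E.
have hdel : forall k, phi k = 0 -> del <= nrm (z0 - k).
  by move=> k hk; apply: ge_inf => //; exists k.
have del0 : 0 <= del by apply: lb_le_inf => // _ [k _ <-]; exact: nrm_ge0.
have hseq : forall n : nat, exists k, phi k = 0 /\ nrm (z0 - k) < del + (n.+1%:R)^-1.
  move=> n; have hpos : 0 < (n.+1%:R : R)^-1 by rewrite invr_gt0 ltr0Sn.
  have [_ [k hk <-] hlt] := inf_adherent hpos hinf.
  by exists k.
pose ks n := projT1 (cid (hseq n)).
have hks : forall n, phi (ks n) = 0 /\ nrm (z0 - ks n) < del + (n.+1%:R)^-1.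
  by move=> n; rewrite /ks; case: cid.
have cauchy : forall e : R, 0 < e -> exists N : nat, forall m n : nat,
    (N <= m)%N -> (N <= n)%N -> nrm (ks m - ks n) < e.
  move=> e he.
  pose c := 4 * (2 * del + 1).
  have [N hN] := arch (c / e ^+ 2).
  exists N => m n hm hn.
  pose eps : R := (N.+1%:R)^-1.
  have heps : 0 < eps by rewrite invr_gt0 ltr0Sn.
  have hq : eps * (N%:R + 1) = 1 by rewrite natr1 mulVf // pnatr_eq0.
  have hbound : forall j, (N <= j)%N -> n2 ip (z0 - ks j) <= (del + eps) ^+ 2.
    move=> j hj; rewrite -(nrm2 hip); have [_ hl] := hks j.
    have hle : (j.+1%:R)^-1 <= eps.
      by rewrite lef_pV2 ?posrE ?ltr0Sn // ler_nat ltnS.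
    rewrite ler_pXn2r // ?nnegrE ?nrm_ge0 //; last by rewrite addr_ge0 // ltW.
    by apply: le_trans (ltW hl) _; rewrite lerD2l.
  have hmid : phi ((2^-1 : C) *: (ks n + ks m)) = 0.
    by rewrite phiZ phiD (proj1 (hks n)) (proj1 (hks m)) addr0 mulr0.
  have hmid2 : 4 * del ^+ 2 <= n2 ip ((z0 - ks n) + (z0 - ks m)).
    have -> : (z0 - ks n) + (z0 - ks m) = (2 : C) *: (z0 - (2^-1 : C) *: (ks n + ks m)).
      rewrite scalerBr (scalerA (2:C) (2^-1:C)) mulfV ?pnatr_eq0 // scale1r scaler_nat mulr2n.
      by rewrite opprD addrACA.

    have c2 : cabs (2 : C) = 2.
      by rewrite -(rmorph_nat (real_complex R)) cabs_real normr_nat.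
    rewrite (n2Z hip) c2.
    have := hdel _ hmid; rewrite -(nrm2 hip) => hd.
    have : del ^+ 2 <= nrm (z0 - 2^-1 *: (ks n + ks m)) ^+ 2.
      by rewrite ler_pXn2r // ?nnegrE ?nrm_ge0.
    lra.
  have hpar := n2_par (z0 - ks n) (z0 - ks m).
  have e1 : (z0 - ks n) - (z0 - ks m) = ks m - ks n.
    by rewrite opprB addrC addrA subrK.
  rewrite e1 in hpar.
  have hb1 := hbound n hn; have hb2 := hbound m hm.
  have hn2 : n2 ip (ks m - ks n) <= c * eps.
    have heps1 : eps <= 1 by rewrite invf_le1 ?ltr0Sn // ler1n.
    rewrite /c; nra.
  have hce : c * eps < e ^+ 2.
    have hN' : c < N%:R * e ^+ 2 by rewrite -ltr_pdivrMr ?exprn_gt0.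
    have hN0 : 0 <= N%:R :> R by [].
    nra.
  rewrite -(ltr_pXn2r (n:=2)) // ?nnegrE ?nrm_ge0 ?ltW // (nrm2 hip); lra.
have [k hk] := hc cauchy.
have nsym : forall a b : H, nrm (a - b) = nrm (b - a).
  by move=> a b; rewrite -(nrmN hip (b - a)) opprB.
have hk0 : phi k = 0.
  apply/eqP; rewrite -cabs_eq0; apply/eqP; apply: le_anti; rewrite cabs_ge0 andbT.
  apply/ler_addgt0Pr => eps heps; rewrite add0r.
  have he : 0 < eps / (M' + 1) by rewrite divr_gt0 // ltr_pwDr.
  have [N hN] := hk _ he.
  have hNN := hN N (leqnn N).
  have -> : phi k = phi (k - ks N) by rewrite phiB (proj1 (hks N)) subr0.
  apply: le_trans (hM' _) _; rewrite nsym.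
  have : M' * nrm (ks N - k) <= M' * (eps / (M' + 1)).
    by apply: ler_wpM2l => //; exact: ltW.
  move=> h1; apply: le_trans h1 _.
  rewrite mulrA ler_pdivrMr ?ltr_pwDr //; nra.
have hmin : forall k', phi k' = 0 -> nrm (z0 - k) <= nrm (z0 - k').
  move=> k' hk'; apply: le_trans (hdel _ hk'); apply/ler_addgt0Pr => eps heps.
  have he2 : 0 < eps / 2 by rewrite divr_gt0.
  have [N1 hN1] := hk _ he2.
  have [N2 hN2] := arch (2 / eps).
  pose n := maxn N1 N2.
  have h1 := hN1 n (leq_maxl _ _).
  have [_ h2] := hks n.
  have h3 : (n.+1%:R)^-1 <= eps / 2.
    rewrite -[eps / 2]invrK lef_pV2 ?posrE ?ltr0Sn ?invr_gt0 //.
    rewrite invf_div; apply: le_trans (ltW hN2) _.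
    by rewrite ler_nat (leq_trans (leq_maxr N1 N2)) ?leqnSn.
  have -> : z0 - k = (z0 - ks n) + (ks n - k) by rewrite addrA subrK.
  apply: le_trans (nrmD hip _ _) _; apply: le_trans (lerD (ltW h2) (ltW h1)) _.
  rewrite -addrA lerD2l; apply: le_trans (lerD h3 (lexx _)) _; by rewrite -splitr.
pose w := z0 - k.
have hw1 : phi w = 1 by rewrite phiB hz0 hk0 subr0.
have horth : forall k', phi k' = 0 -> ip k' w = 0.
  move=> k' hk'; rewrite (ipC hip); apply/eqP; rewrite conjc_eq0; apply/eqP.
  apply: min_orth => t.
  have hkt : phi (k - t *: k') = 0 by rewrite phiB phiZ hk' hk0 mulr0 subr0.
  have := hmin _ hkt.
  have -> : z0 - (k - t *: k') = w + t *: k' by rewrite opprB addrA addrAC.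
  move=> h; rewrite -!(nrm2 hip); rewrite ler_pXn2r // ?nnegrE ?nrm_ge0 //.
have hn2w : n2 ip w != 0.
  apply/eqP => h0; have w0 : w = 0 by apply: (ip_eq0 hip); rewrite (ip_n2 hip) h0.
  by move: hw1; rewrite w0 phi0 => /eqP; rewrite eq_sym oner_eq0.
exists (((n2 ip w)^-1)%:C *: w) => x.
have hx : phi (x - phi x *: w) = 0 by rewrite phiB phiZ hw1 mulr1 subrr.
have := horth _ hx; rewrite (ipBl hip) (ipZl hip) (ip_n2 hip) => /eqP.
rewrite subr_eq0 => /eqP hxw.
by rewrite (ipZr hip) conjc_real_eq hxw mulrCA -rmorphM mulVf // rmorph1 mulr1.
Qed.

End Riesz.

End M8.
Import M8.

Module M9.
Set Implicit Arguments.
Unset Strict Implicit.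
Unset Printing Implicit Defensive.
Import M1.
Import M2.
Import M3.
Import M4.
Import M5.
Import M6.
Import M7.
Import M8.

Local Open Scope ring_scope.
Local Open Scope complex_scope.
Local Open Scope classical_set_scope.
Local Notation cRe := complex.Re.
Local Notation cIm := complex.Im.

Section Assembly.
Variables (R : realType) (H : lmodType R[i]) (ip : H -> H -> R[i]).
Hypothesis hH : is_hilbert ip.
Local Notation C := R[i].
Local Notation nrm := (hnorm ip).
Let hip : is_inner_product ip := proj1 hH.

Lemma adjoint_spec f : bounded_op ip f -> forall x y, ip (f x) y = ip x (adjoint ip f y).
Proof.
move=> [hf [M hM]].
have hex : forall y, exists v, forall x, ip (f x) y = ip x v.
  move=> y; apply: (@riesz _ _ _ hH (fun x => ip (f x) y) _ (M * nrm y)).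
    by move=> a x z; rewrite hf (ipDl hip) (ipZl hip).
  move=> x; apply: le_trans (CS hip _ _) _.
  rewrite mulrAC; apply: ler_wpM2r; first exact: nrm_ge0.
  exact: hM.
have hadj : exists g, is_adjoint ip f g.
  exists (fun y => projT1 (cid (hex y))) => x y.
  by case: (cid (hex y)).
rewrite /adjoint; case: pselect => // e x y.
by case: (cid e) => g /= ->.
Qed.

Lemma psd_gram (l : nat) (f : 'I_l -> H) : psd (gram ip f).
Proof.
move=> v; rewrite -/(qf _ _) qfE.
have := ip_ge0 hip (\sum_a conjc (v a ord0) *: f a).
rewrite (ip_suml hip) => h; apply: le_trans h _; rewrite le_eqVlt; apply/orP; left.
apply/eqP; apply: eq_bigr => a _; rewrite (ipZl hip) (ip_sumr hip) mulr_sumr.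
by apply: eq_bigr => b _; rewrite (ipZr hip) conjcK mxE; ring.
Qed.

Lemma scale_bound (f : H -> H) (c : R) : linH f ->
  (forall z, nrm z <= 1 -> nrm (f z) <= c) -> forall z, nrm (f z) <= c * nrm z.
Proof.
move=> hf hc z.
have [z0|nz0] := eqVneq (nrm z) 0.
  by rewrite z0 mulr0 (nrm_eq0 hip z0) (linH0 hf) nrm0.
have hpos : 0 < nrm z by rewrite lt_neqAle eq_sym nz0 nrm_ge0.
have h1 : nrm (((nrm z)^-1)%:C *: z) = 1.
  by rewrite (nrmZ hip) cabs_real ger0_norm ?invr_ge0 ?nrm_ge0 // mulVf.
have h1' : nrm (((nrm z)^-1)%:C *: z) <= 1 by rewrite h1.
have := hc _ h1'; rewrite (linHZ hf) (nrmZ hip) cabs_real.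
rewrite ger0_norm ?invr_ge0 ?nrm_ge0 // mulrC -ler_pdivlMr ?invr_gt0 //.
by rewrite invrK mulrC.
Qed.

Lemma opnorm_le (f : H -> H) (c : R) :
  (forall z, nrm z <= 1 -> nrm (f z) <= c) -> opnorm ip f <= c.
Proof.
move=> hc; apply: ge_sup.
  by exists (nrm (f 0)), 0 => //=; rewrite (nrm0 hip) ler01.
by move=> _ [z hz <-]; exact: hc.
Qed.

Lemma le_opnorm (f : H -> H) (c : R) z :
  (forall z, nrm z <= 1 -> nrm (f z) <= c) -> nrm z <= 1 -> nrm (f z) <= opnorm ip f.
Proof.
move=> hc hz; apply: ub_le_sup; last by exists z.
by exists c => _ [z' hz' <-]; exact: hc.
Qed.

Lemma bnd_pos f : bounded_op ip f -> exists M, 0 <= M /\ forall z, nrm (f z) <= M * nrm z.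
Proof.
move=> [_ [M hM]]; exists (Num.max M 0); split; first by rewrite le_max lexx orbT.
move=> z; apply: le_trans (hM z) _; apply: ler_wpM2r; first exact: nrm_ge0.
by rewrite le_max lexx.
Qed.

Lemma contraction_of x : bounded_op ip x -> opnorm ip x <= 1 ->
  forall z, nrm (x z) <= nrm z.
Proof.
move=> hx h1 z; have [M [hM0 hM]] := bnd_pos hx.
have hc : forall z, nrm z <= 1 -> nrm (x z) <= M.
  move=> z' hz'; apply: le_trans (hM z') _; rewrite -[X in _ <= X]mulr1.
  exact: ler_wpM2l.
rewrite -[X in _ <= X]mul1r; apply: (scale_bound (proj1 hx)) => z' hz'.
exact: le_trans (le_opnorm hc hz') h1.
Qed.

Lemma unit_bound (f : H -> H) (c : R) : linH f ->
  (forall z, nrm z = 1 -> nrm (f z) <= c) -> forall z, nrm (f z) <= c * nrm z.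
Proof.
move=> hf hc z.
have [z0|nz0] := eqVneq (nrm z) 0.
  by rewrite z0 mulr0 (nrm_eq0 hip z0) (linH0 hf) (nrm0 hip).
have hpos : 0 < nrm z by rewrite lt_neqAle eq_sym nz0 nrm_ge0.
have h1 : nrm (((nrm z)^-1)%:C *: z) = 1.
  by rewrite (nrmZ hip) cabs_real ger0_norm ?invr_ge0 ?nrm_ge0 // mulVf.
have := hc _ h1; rewrite (linHZ hf) (nrmZ hip) cabs_real.
rewrite ger0_norm ?invr_ge0 ?nrm_ge0 // mulrC -ler_pdivlMr ?invr_gt0 //.
by rewrite invrK mulrC.
Qed.

Variables (l : nat) (a b : 'I_l -> H -> H).
Hypotheses (ha : forall j, bounded_op ip (a j)) (hb : forall j, bounded_op ip (b j)).

Definition phiT eta zeta :=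
  S1vec ip (fun i => scal_col_adj ip (psd_sqrt (gramQ ip b eta)^T) a i zeta).

Lemma gramQ_tr eta : (gramQ ip b eta)^T = gram ip (fun j => b j eta).
Proof. by apply/matrixP => i j; rewrite !mxE. Qed.

Lemma phiTE eta zeta :
  phiT eta zeta = cRe (\tr (psd_sqrt (gram ip (act (psd_sqrt (gram ip (fun j => b j eta)))
        (fun j => adjoint ip (a j) zeta))))).
Proof. by rewrite /phiT gramQ_tr. Qed.

Lemma ip_Tmap x eta zeta :
  ip (Tmap a b x eta) zeta = \sum_j ip (x (b j eta)) (adjoint ip (a j) zeta).
Proof.
rewrite /Tmap (ip_suml hip); apply: eq_bigr => j _.
exact: adjoint_spec.
Qed.

Lemma keyA x eta zeta : linH x -> (forall z, nrm (x z) <= nrm z) ->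
  cabs (ip (Tmap a b x eta) zeta) <= phiT eta zeta.
Proof.
move=> hx hxc; rewrite ip_Tmap phiTE.
have [hT hTT] := psd_sqrt_spec (psd_gram (fun j => b j eta)).
have [hR hRR] := psd_sqrt_spec (psd_gram (act (psd_sqrt (gram ip (fun j => b j eta)))
        (fun j => adjoint ip (a j) zeta))).
exact: (core_le hip hT (esym hTT) hR (esym hRR) hx hxc).
Qed.

Lemma keyB eta zeta : exists x, bounded_op ip x /\ opnorm ip x <= 1 /\
  ip (Tmap a b x eta) zeta = (phiT eta zeta)%:C.
Proof.
rewrite phiTE.
have [hT hTT] := psd_sqrt_spec (psd_gram (fun j => b j eta)).
have [hR hRR] := psd_sqrt_spec (psd_gram (act (psd_sqrt (gram ip (fun j => b j eta)))
        (fun j => adjoint ip (a j) zeta))).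
have [x [hx [hxc hxe]]] := core_eq hip hT (esym hTT) hR (esym hRR).
exists x; split; first by split => //; exists 1 => z; rewrite mul1r.
split; first by apply: opnorm_le => z hz; exact: le_trans (hxc z) hz.
by rewrite ip_Tmap.
Qed.

Lemma Tmap_lin x : linH x -> linH (Tmap a b x).
Proof.
move=> hx al y y'; rewrite /Tmap scaler_sumr -big_split /=; apply: eq_bigr => j _.
by rewrite (proj1 (hb j)) hx (proj1 (ha j)).
Qed.

Lemma Tmap_bound : exists CT, 0 <= CT /\ forall x, linH x ->
  (forall z, nrm (x z) <= nrm z) -> forall y, nrm (Tmap a b x y) <= CT * nrm y.
Proof.
have [Ma hMa] := choice (fun j => bnd_pos (ha j)).
have [Mb hMb] := choice (fun j => bnd_pos (hb j)).
exists (\sum_j Ma j * Mb j); split.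
  by apply: sumr_ge0 => j _; apply: mulr_ge0; [exact: (proj1 (hMa j)) | exact: (proj1 (hMb j))].
move=> x hx hxc y; rewrite /Tmap mulr_suml; apply: le_trans (nrm_sum hip _) _.
apply: ler_sum => j _; apply: le_trans (proj2 (hMa j) _) _.
rewrite -mulrA; apply: ler_wpM2l; first exact: (proj1 (hMa j)).
exact: le_trans (hxc _) (proj2 (hMb j) _).
Qed.

Lemma lin0 : linH (fun _ : H => 0).
Proof. by move=> al y y'; rewrite scaler0 addr0. Qed.

Lemma phiT_ge0 eta zeta : 0 <= phiT eta zeta.
Proof.
apply: le_trans (cabs_ge0 _) (keyA _ _ lin0 _) => z.
by rewrite (nrm0 hip) nrm_ge0.
Qed.

Theorem main_thm :
  Tnorm ip a b =
  sup [set S1col ip (scal_col_adj ip (psd_sqrt (gramQ ip b eta)^T) a)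
      | eta in [set eta | hnorm ip eta = 1]].
Proof.
have [CT [hCT0 hCT]] := Tmap_bound.
set RS := [set _ | eta in _].
pose Z eta := [set phiT eta zeta | zeta in [set zeta | nrm zeta <= 1]].
have S1colE : forall eta, S1col ip (scal_col_adj ip (psd_sqrt (gramQ ip b eta)^T) a) = sup (Z eta).
  by [].
have phi_le : forall eta zeta, nrm zeta <= 1 -> phiT eta zeta <= CT * nrm eta.
  move=> eta zeta hz; have [x [hxb [hx1 hxe]]] := keyB eta zeta.
  have hxc := contraction_of hxb hx1.
  have -> : phiT eta zeta = cRe (ip (Tmap a b x eta) zeta) by rewrite hxe.
  apply: le_trans (Re_le_cabs _) _; apply: le_trans (CS hip _ _) _.
  apply: le_trans (hCT x (proj1 hxb) hxc eta); rewrite -[X in _ <= X]mulr1.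
  by apply: ler_wpM2l => //; exact: nrm_ge0.
have Zub : forall eta, has_ubound (Z eta).
  by move=> eta; exists (CT * nrm eta) => _ [zeta hz <-]; exact: phi_le.
have Zin : forall eta zeta, nrm zeta <= 1 -> phiT eta zeta <= sup (Z eta).
  by move=> eta zeta hz; apply: ub_le_sup => //; exists zeta.
have Zne : forall eta, Z eta !=set0.
  by move=> eta; exists (phiT eta 0), 0 => //=; rewrite (nrm0 hip) ler01.
have Zle : forall eta, sup (Z eta) <= CT * nrm eta.
  by move=> eta; apply: ge_sup => // _ [zeta hz <-]; exact: phi_le.
have Zge0 : forall eta, 0 <= sup (Z eta).
  move=> eta; apply: le_trans (Zin eta 0 _); first exact: phiT_ge0.
  by rewrite (nrm0 hip) ler01.
have RSub : has_ubound RS.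
  by exists CT => _ [eta /= heta <-]; rewrite S1colE; apply: le_trans (Zle eta) _; rewrite heta mulr1.
have RSin : forall eta, nrm eta = 1 -> sup (Z eta) <= sup RS.
  by move=> eta he; apply: ub_le_sup => //; exists eta => //; rewrite S1colE.
have Sig0 : 0 <= sup RS.
  have [[eta he]|ne] := pselect (exists eta, nrm eta = 1).
    exact: le_trans (Zge0 eta) (RSin eta he).
  have -> : RS = set0.
    by apply/seteqP; split => // _ [eta /= he _]; apply: ne; exists eta.
  by rewrite sup0.
pose TS := [set opnorm ip (Tmap a b x) | x in [set x | bounded_op ip x /\ opnorm ip x <= 1]].
have Tx_le : forall x, bounded_op ip x -> opnorm ip x <= 1 ->
    forall y, nrm y <= 1 -> nrm (Tmap a b x y) <= CT.
  move=> x hxb hx1 y hy; apply: le_trans (hCT x (proj1 hxb) (contraction_of hxb hx1) y) _.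
  by rewrite -[X in _ <= X]mulr1; apply: ler_wpM2l.
have TSub : has_ubound TS.
  by exists CT => _ [x [hxb hx1] <-]; apply: opnorm_le; exact: Tx_le.
have hb0 : bounded_op ip (fun _ : H => 0).
  by split; [exact: lin0 | exists 0 => z; rewrite (nrm0 hip) mul0r].
have hb01 : opnorm ip (fun _ : H => 0) <= 1.
  by apply: opnorm_le => z _; rewrite (nrm0 hip) ler01.
have Tn0 : 0 <= Tnorm ip a b.
  apply: le_trans (ub_le_sup TSub _); last by exists (fun _ : H => 0).
  apply: le_trans (le_opnorm (Tx_le _ hb0 hb01) (z := 0) _).
    exact: nrm_ge0.
  by rewrite (nrm0 hip) ler01.
apply/eqP; rewrite eq_le; apply/andP; split.
  apply: ge_sup; first by exists (opnorm ip (Tmap a b (fun _ : H => 0))), (fun _ : H => 0).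
  move=> _ [x [hxb hx1] <-]; apply: opnorm_le => y hy.
  have hlin := Tmap_lin (proj1 hxb).
  have hxc := contraction_of hxb hx1.
  apply: le_trans (unit_bound hlin (c := sup RS) _ y) _; last first.
    by rewrite -[X in _ <= X]mulr1; apply: ler_wpM2l.
  move=> eta heta; set t := Tmap a b x eta.
  have [t0|nt0] := eqVneq (nrm t) 0; first by rewrite t0.
  have hpos : 0 < nrm t by rewrite lt_neqAle eq_sym nt0 nrm_ge0.
  pose zeta := ((nrm t)^-1)%:C *: t.
  have hz1 : nrm zeta = 1.
    by rewrite (nrmZ hip) cabs_real ger0_norm ?invr_ge0 ?nrm_ge0 // mulVf.
  have hipz : cabs (ip t zeta) = nrm t.
    rewrite (ipZr hip) conjc_real_eq (ip_n2 hip) -rmorphM cabs_real -(nrm2 hip).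
    by rewrite expr2 mulrA mulVf // mul1r ger0_norm // nrm_ge0.
  rewrite -hipz; apply: le_trans (keyA _ _ (proj1 hxb) hxc) _.
  apply: le_trans (RSin eta heta); apply: Zin; by rewrite hz1.
have [[eta0 he0]|ne] := pselect (exists eta, nrm eta = 1); last first.
  have -> : RS = set0.
    by apply/seteqP; split => // _ [eta /= he _]; apply: ne; exists eta.
  by rewrite sup0.
apply: ge_sup; first by exists (sup (Z eta0)), eta0 => //; rewrite S1colE.
move=> _ [eta /= heta <-]; rewrite S1colE; apply: ge_sup => // _ [zeta hz <-].
have [x [hxb [hx1 hxe]]] := keyB eta zeta.
have -> : phiT eta zeta = cRe (ip (Tmap a b x eta) zeta) by rewrite hxe.
apply: le_trans (Re_le_cabs _) _; apply: le_trans (CS hip _ _) _.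
have h1 : nrm (Tmap a b x eta) * nrm zeta <= nrm (Tmap a b x eta).
  by rewrite -[X in _ <= X]mulr1; apply: ler_wpM2l => //; exact: nrm_ge0.
apply: le_trans h1 _.
apply: le_trans (ub_le_sup TSub _); last by exists x.
apply: (le_opnorm (Tx_le _ hxb hx1)); by rewrite heta.
Qed.

End Assembly.

End M9.
Import M9.

Unset Implicit Arguments.
Local Open Scope ring_scope.
Local Open Scope classical_set_scope.

Theorem theorem1p10 (R : realType) (H : lmodType R[i]) (ip : H -> H -> R[i])
  (hH : is_hilbert ip) (l : nat) (a b : 'I_l -> H -> H)
  (ha : forall j, bounded_op ip (a j)) (hb : forall j, bounded_op ip (b j)) :
  Tnorm ip a b =
  sup [set S1col ip (scal_col_adj ip (psd_sqrt (gramQ ip b eta)^T) a)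
      | eta in [set eta | hnorm ip eta = 1]].
Proof.
exact: (main_thm hH ha hb).
Qed.
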